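(* Let $N\ge1$, let $\mathcal L\in\mathbb{R}^{N\times N}$ be the Laplacian of an undirected graph $\mathcal G$ on $N$ nodes, and let $\Delta\in\mathbb{R}^{N\times N}$ be a diagonal matrix with every diagonal entry in $\{0,1\}$. Then every nonzero eigenvalue of $\mathcal H=\mathcal L+\Delta$ is not less than $$\lambda_H:=\frac{4}{N(N^2-N+4)}>0.$$
   Context: The graph $\mathcal G$ has node set $\{1,\dots,N\}$ and adjacency entries $a_{ij}\in\{0,1\}$ with $a_{ij}=a_{ji}$ (undirected, no self-loops); its Laplacian $\mathcal L$ has $l_{ii}=\sum_{j=1}^Na_{ij}$ and $l_{ij}=-a_{ij}$ for $i\ne j$. *)

(* Defs.v *)
From HB Require Import structures.
From mathcomp Require Import all_boot all_order all_algebra.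
Set Implicit Arguments. Unset Strict Implicit. Unset Printing Implicit Defensive.
Import Order.TTheory GRing.Theory Num.Theory.
Local Open Scope ring_scope.

(* An undirected graph without self-loops on nodes 'I_N is a symmetric,
   irreflexive relation e; its adjacency entries are a_ij = 1 if e i j, else 0. *)
Definition adj (R : nzRingType) (N : nat) (e : rel 'I_N) : 'M[R]_N :=
  \matrix_(i, j) (e i j)%:R.

Definition laplacian (R : nzRingType) (N : nat) (e : rel 'I_N) : 'M[R]_N :=
  \matrix_(i, j) (if i == j then \sum_(k < N) adj R e i k else - adj R e i j).

Definition lambdaH (R : fieldType) (N : nat) : R :=
  4 / (N%:R * (N%:R ^+ 2 - N%:R + 4)).

(* Main.v *)
Require Import Defs.
From HB Require Import structures.
From mathcomp Require Import all_boot all_order all_algebra.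
From mathcomp Require Import ring lra.
Import Order.TTheory GRing.Theory Num.Theory.
Set Implicit Arguments. Unset Strict Implicit.
Local Open Scope ring_scope.

Definition Fe (R : realDomainType) (N : nat) (e : rel 'I_N) (x : 'I_N -> R) i j :=
  (e i j)%:R * (x i - x j) ^+ 2.
Definition GA (R : realDomainType) (N : nat) (e : rel 'I_N) (x : 'I_N -> R) (A : {set 'I_N}) :=
  \sum_(i in A) \sum_(j in A) Fe e x i j.

Lemma Fe_ge0 (R : realDomainType) (N : nat) (e : rel 'I_N) (x : 'I_N -> R) i j :
  0 <= Fe e x i j.
Proof. by rewrite /Fe mulr_ge0 ?ler0n ?sqr_ge0. Qed.

Lemma sum_in_le (R : realDomainType) (T : finType) (A : {set T}) (f : T -> R) :
  (forall i, 0 <= f i) -> \sum_(i in A) f i <= \sum_i f i.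
Proof.
move=> f0; rewrite big_mkcond /=; apply: ler_sum => i _.
by case: (i \in A) => //.
Qed.

Lemma GA_le (R : realDomainType) (N : nat) (e : rel 'I_N) (x : 'I_N -> R) A :
  GA e x A <= GA e x setT.
Proof.
rewrite /GA.
apply: (@le_trans _ _ (\sum_(i in A) \sum_(j in setT) Fe e x i j)).
  apply: ler_sum => i _.
  apply: (@le_trans _ _ (\sum_j Fe e x i j)); first by apply: sum_in_le => j; exact: Fe_ge0.
  by rewrite [X in _ <= X](eq_bigl predT) // => j; rewrite inE.
apply: (@le_trans _ _ (\sum_i \sum_(j in setT) Fe e x i j)).
  by apply: sum_in_le => i; apply: sumr_ge0 => j _; exact: Fe_ge0.
by rewrite [X in _ <= X](eq_bigl predT) // => j; rewrite inE.
Qed.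

Lemma GA_setU1 (R : realDomainType) (N : nat) (e : rel 'I_N) (x : 'I_N -> R)
  (e_sym : symmetric e) (a : 'I_N) (A : {set 'I_N}) : a \notin A ->
  GA e x (a |: A) = GA e x A + 2 * \sum_(j in A) Fe e x a j.
Proof.
move=> aA; rewrite /GA.
have Faa : Fe e x a a = 0 by rewrite /Fe subrr expr0n /= mulr0.
under eq_bigr => i _ do rewrite (big_setU1 a aA).
rewrite (big_setU1 a aA) /= Faa add0r.
rewrite big_split /=.
have -> : \sum_(i in A) Fe e x i a = \sum_(j in A) Fe e x a j.
  by apply: eq_bigr => i _; rewrite /Fe e_sym -sqrrN opprB.
lra.
Qed.

Lemma path_diffs (R : realDomainType) (N : nat) (e : rel 'I_N) (x : 'I_N -> R)
  (e_sym : symmetric e) (ps : seq 'I_N) : forall y, path e y ps -> uniq (y :: ps) ->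
  exists ds : seq R, [/\ size ds = size ps, x y - x (last y ps) = \sum_(d <- ds) d
     & 2 * \sum_(d <- ds) d ^+ 2 <= GA e x [set:: y :: ps]].
Proof.
elim: ps => [|z ps IH] y /=.
  move=> _ _; exists [::]; rewrite !big_nil subrr mulr0; split => //.
  rewrite /GA; apply: sumr_ge0 => i _; apply: sumr_ge0 => j _; exact: Fe_ge0.
move=> /andP[eyz pz] /andP[yn uz].
have [ds [sz dsum dsq]] := IH z pz uz.
exists ((x y - x z) :: ds); split; first by rewrite /= sz.
  by rewrite big_cons -dsum; ring.
rewrite set_cons GA_setU1 //; last by rewrite inE.
have : Fe e x y z <= \sum_(j in [set:: z :: ps]) Fe e x y j.
  rewrite (bigD1 z) /=; last by rewrite inE mem_head.
  rewrite lerDl; apply: sumr_ge0 => j _; exact: Fe_ge0.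
rewrite /Fe eyz mul1r big_cons => H.
lra.
Qed.

Lemma cs_seq (R : realFieldType) (s : seq R) :
  (\sum_(t <- s) t)^+2 <= (size s)%:R * \sum_(t <- s) t^+2.
Proof.
elim: s => [|t s IH]; first by rewrite !big_nil expr0n /= mul0r.
rewrite !big_cons /=.
have S2ge : 0 <= \sum_(u <- s) u^+2 by apply: sumr_ge0 => u _; exact: sqr_ge0.
move: IH S2ge.
set S := \sum_(u <- s) u; set S2 := \sum_(u <- s) u^+2.
rewrite mulrSr.
have : 0 <= (size s)%:R :> R by apply: ler0n.
set n := (size s)%:R => n0 IH S20.
rewrite -subr_ge0.
have key : 0 <= n * ((n + 1) * (t ^+ 2 + S2) - (t + S) ^+ 2).
  have -> : n * ((n + 1) * (t ^+ 2 + S2) - (t + S) ^+ 2) =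
     (n * t - S)^+2 + (n + 1) * (n * S2 - S^+2) by ring.
  apply: addr_ge0; first exact: sqr_ge0.
  apply: mulr_ge0; first lra.
  by rewrite subr_ge0.
have [n0'|nn0] := eqVneq n 0.
  move: IH; rewrite n0' mul0r => IH.
  have S0 : S = 0 by apply/eqP; rewrite -sqrf_eq0 eq_le IH sqr_ge0.
  rewrite S0 add0r addr0 mul1r; lra.
have np : 0 < n by rewrite lt_def nn0 n0.
by rewrite pmulr_rge0 in key.
Qed.


Theorem lemma3 (R : rcfType) (N : nat) (hN : (0 < N)%N) (e : rel 'I_N)
  (e_sym : symmetric e) (e_irr : irreflexive e) (Delta : 'M[R]_N)
  (Delta_diag : forall i j : 'I_N, i != j -> Delta i j = 0)
  (Delta01 : forall i : 'I_N, Delta i i = 0 \/ Delta i i = 1) :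
  0 < lambdaH R N /\
  (forall a : R, eigenvalue (laplacian R e + Delta) a -> a != 0 -> lambdaH R N <= a).
Proof.
have n1 : 1 <= N%:R :> R by rewrite ler1n.
split.
  rewrite /lambdaH; apply: divr_gt0 => //; apply: mulr_gt0; nra.
move=> a /eigenvalueP [v vH vnz] anz.
set H := laplacian R e + Delta.
pose deg i := \sum_(k < N) ((e i k)%:R : R).
have HE : forall i j, H i j = (i == j)%:R * (deg i + Delta i i) - (e i j)%:R.
  move=> i j; rewrite /H /laplacian /adj !mxE.
  case: eqP => [<-|/eqP ne].
    rewrite e_irr mul1r subr0.
    by under eq_bigr => k _ do rewrite mxE.
  by rewrite (Delta_diag _ _ ne) addr0 mul0r sub0r.
have veq : forall j, \sum_i v 0 i * H i j = a * v 0 j.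
  by move=> j; move/rowP: vH => /(_ j); rewrite !mxE.
have [p vp] : exists p, v 0 p != 0.
  case: (pickP (fun j => v 0 j != 0)) => [p vp|all0]; first by exists p.
  by case/eqP: vnz; apply/rowP => j; rewrite mxE; move: (all0 j) => /negbFE/eqP.
have csym := sym_connect_sym e_sym.
have cstep : forall i j, connect e p i -> e i j -> connect e p j.
  by move=> i j pi eij; apply: connect_trans pi (connect1 eij).
pose x i := if connect e p i then v 0 i else 0.
have H0 : forall i j, i != j -> ~~ e i j -> H i j = 0.
  by move=> i j ne nee; rewrite HE (negbTE ne) (negbTE nee) mul0r subr0.
have xeq : forall j, \sum_i x i * H i j = a * x j.
  move=> j; rewrite /x; case cj: (connect e p j).
    rewrite -veq; apply: eq_bigr => i _; case ci: (connect e p i) => //.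
    rewrite H0 ?mulr0 //.
      by apply/eqP => eij; rewrite eij cj in ci.
    by apply/negP => eij; rewrite e_sym in eij; rewrite (cstep _ _ cj eij) in ci.
  rewrite mulr0; apply: big1 => i _; case ci: (connect e p i); last by rewrite mul0r.
  rewrite H0 ?mulr0 //.
    by apply/eqP => eij; rewrite eij cj in ci.
  by apply/negP => eij; rewrite (cstep _ _ ci eij) in cj.
set S := \sum_i x i ^+ 2.
set G := GA e x setT.
set D := \sum_i Delta i i * x i ^+ 2.
have GT : G = \sum_i \sum_j Fe e x i j.
  rewrite /G /GA; apply: eq_big => [i|i _]; first by rewrite inE.
  by apply: eq_bigl => j; rewrite inE.
set C := \sum_i \sum_j (e i j)%:R * (x i * x j).
set Dg := \sum_i x i ^+ 2 * deg i.
have Q1 : a * S = \sum_j (\sum_i x i * H i j) * x j.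
  rewrite /S mulr_sumr; apply: eq_bigr => j _; rewrite xeq; ring.
have Q2 : \sum_j (\sum_i x i * H i j) * x j = Dg + D - C.
  have -> : C = \sum_j \sum_i (e i j)%:R * (x i * x j) by rewrite /C exchange_big.
  have -> : Dg + D = \sum_j x j ^+ 2 * (deg j + Delta j j).
    by rewrite /Dg /D -big_split; apply: eq_bigr => j _ /=; ring.
  rewrite -sumrB; apply: eq_bigr => j _.
  rewrite mulr_suml.
  have -> : \sum_i x i * H i j * x j = \sum_i ((i == j)%:R * (x i * x j * (deg i + Delta i i)))
             - \sum_i (e i j)%:R * (x i * x j).
    by rewrite -sumrB; apply: eq_bigr => i _; rewrite HE; ring.
  rewrite (bigD1 j) //= eqxx big1 => [|i /negbTE ->]; last by rewrite mul0r.
  by rewrite addr0 mul1r -expr2.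
have Q3 : G = 2 * Dg - 2 * C.
  rewrite GT.
  have sA : \sum_i \sum_j (e i j)%:R * x i ^+ 2 = Dg.
    rewrite /Dg; apply: eq_bigr => i _; rewrite /deg mulr_sumr; apply: eq_bigr => j _; ring.
  have sB : \sum_i \sum_j (e j i)%:R * x j ^+ 2 = Dg.
    by rewrite exchange_big /=.
  have -> : \sum_i \sum_j Fe e x i j = \sum_i (\sum_j (e i j)%:R * x i ^+ 2
        + \sum_j (e j i)%:R * x j ^+ 2 - 2 * \sum_j (e i j)%:R * (x i * x j)).
    apply: eq_bigr => i _.
    have -> : \sum_j Fe e x i j = \sum_j (((e i j)%:R * x i ^+ 2 + (e j i)%:R * x j ^+ 2)
        - 2 * ((e i j)%:R * (x i * x j))).
      by apply: eq_bigr => j _; rewrite /Fe (e_sym j i); ring.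
    by rewrite sumrB big_split -mulr_sumr.
  rewrite sumrB big_split -mulr_sumr sA sB /C /=; set X := (X in _ - X = _); set Y := (X in _ = _ - X); have XY : X = Y by []. by rewrite XY; ring.
have Quad : 2 * (a * S) = G + 2 * D by rewrite Q1 Q2 Q3; ring.
have Dge : 0 <= D.
  by apply: sumr_ge0 => i _; case: (Delta01 i) => ->; rewrite ?mul0r ?mul1r ?sqr_ge0.
have Gge : 0 <= G.
  by rewrite GT; apply: sumr_ge0 => i _; apply: sumr_ge0 => j _; exact: Fe_ge0.
have xpp : x p = v 0 p by rewrite /x connect0.
have sq_gt0 : forall y : R, y != 0 -> 0 < y ^+ 2.
  by move=> y yn; rewrite lt_def sqrf_eq0 yn sqr_ge0.
have Spos : 0 < S.
  rewrite /S (bigD1 p) //=; apply: (@lt_le_trans _ _ (x p ^+ 2)).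
    by apply: sq_gt0; rewrite xpp.
  by rewrite lerDl; apply: sumr_ge0 => i _; exact: sqr_ge0.
have aS0 : 0 <= a * S by lra.
have apos : 0 < a.
  by rewrite lt_def anz /=; rewrite pmulr_lge0 in aS0.
have Dle : D <= a * S by lra.
have Gle : G <= 2 * (a * S) by lra.
have pathb : forall i j, connect e i j -> exists ds : seq R,
   [/\ ((size ds).+1 <= N)%N, x i - x j = \sum_(d <- ds) d
     & 2 * \sum_(d <- ds) d ^+ 2 <= G].
  move=> i j /connectP [ps pth ->].
  case: (shortenP pth) => ps' pth' uq _.
  have [ds [sz dsum dsq]] := path_diffs x e_sym pth' uq.
  exists ds; split => //.
    rewrite sz; have := max_card [pred z in i :: ps'].
    by rewrite card_ord (card_uniqP uq).
  by apply: le_trans dsq _; exact: GA_le.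
set n := N%:R : R.
have key : S <= (n ^+ 2 - n + 1) * (a * S).
have n1' : 0 <= n - 1 by rewrite /n; lra.
have natn : forall ds : seq R, ((size ds).+1 <= N)%N -> (size ds)%:R + 1 <= n.
  by move=> ds h; rewrite -[_ + 1]mulrSr /n ler_nat.
have Tsum : forall c : R, \sum_(i < N) c = n * c.
  by move=> c; rewrite sumr_const card_ord -mulr_natl.
case: (pickP (fun q => connect e p q && (Delta q q == 1))) => [q /andP[cq /eqP Dq] | noq].
  have xq2 : x q ^+ 2 <= D.
    rewrite /D (bigD1 q) //= Dq mul1r lerDl; apply: sumr_ge0 => i _.
    by case: (Delta01 i) => ->; rewrite ?mul0r ?mul1r ?sqr_ge0.
  have xi2 : forall i, x i ^+ 2 <= n * (a * S).
    move=> i; case ci: (connect e p i); last first.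
      by rewrite /x ci expr0n /=; apply: mulr_ge0 => //; lra.
    have ciq : connect e i q by apply: connect_trans cq; rewrite csym.
    have [ds [sz dsum dsq]] := pathb _ _ ciq.
    have xiE : x i = \sum_(d <- x q :: ds) d by rewrite big_cons -dsum; ring.
    have cs := cs_seq (x q :: ds).
    rewrite -xiE big_cons /= in cs.
    apply: le_trans cs _.
    rewrite [_.+1%:R]mulrSr.
    apply: ler_pM.
    - by apply: addr_ge0; [exact: ler0n | lra].
    - by apply: addr_ge0; [exact: sqr_ge0 | apply: sumr_ge0 => d _; exact: sqr_ge0].
    - exact: natn.
    - lra.
  have T := Tsum (n * (a * S)).
  rewrite (bigD1 q) //= in T.
  have S' : \sum_(i < N | i != q) x i ^+ 2 <= \sum_(i < N | i != q) n * (a * S).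
    by apply: ler_sum => i _; exact: xi2.
  have SE : S = x q ^+ 2 + \sum_(i < N | i != q) x i ^+ 2 by rewrite /S (bigD1 q).
  have xqS : x q ^+ 2 <= a * S by lra.
  move: T S' SE xqS; set w := a * S.
  set S1 := \sum_(i < N | i != q) x i ^+ 2; set T1 := \sum_(i < N | i != q) n * w.
  move=> T S' SE xqS.
  have -> : (n ^+ 2 - n + 1) * w = n * (n * w) - n * w + w by ring.
  lra.
have DC : forall i, connect e p i -> Delta i i = 0.
  move=> i ci; case: (Delta01 i) => // h.
  by have := noq i; rewrite ci h eqxx.
have xD : forall i, x i * Delta i i = 0.
  by move=> i; rewrite /x; case ci: (connect e p i); [rewrite DC // mulr0 | rewrite mul0r].
have rowsum : forall i, \sum_j H i j = Delta i i.
  move=> i; under eq_bigr => j _ do rewrite HE.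
  rewrite sumrB (bigD1 i) //= eqxx big1 => [|j /negbTE]; last by rewrite eq_sym => ->; rewrite mul0r.
  set Y := \sum_(_ < N) _.
  have -> : Y = deg i by [].
  by rewrite addr0 mul1r addrAC subrr add0r.
have sumx0 : \sum_j x j = 0.
  have : a * \sum_j x j = 0.
    rewrite mulr_sumr; under eq_bigr => j _ do rewrite -xeq.
    rewrite exchange_big /=; apply: big1 => i _.
    by rewrite -mulr_sumr rowsum xD.
  by move/eqP; rewrite mulf_eq0 (negbTE anz) /= => /eqP.
have xi2 : forall i, x i ^+ 2 <= (n - 1) * (a * S).
  move=> i; case: (eqVneq (x i) 0) => [->|xin].
    by rewrite expr0n /=; apply: mulr_ge0.
  have ci : connect e p i.
    by case ci: (connect e p i) => //; move: xin; rewrite /x ci eqxx.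
  have [r /andP[cr xr]] : exists r, connect e p r && (x i * x r <= 0).
    case: (pickP (fun r => connect e p r && (x i * x r <= 0))) => [r h|none]; first by exists r.
    exfalso.
    have z : \sum_r x i * x r = 0 by rewrite -mulr_sumr sumx0 mulr0.
    have : 0 < \sum_r x i * x r.
      rewrite (bigD1 i) //=; apply: (@lt_le_trans _ _ (x i * x i)).
        by rewrite -expr2; exact: sq_gt0.
      rewrite lerDl; apply: sumr_ge0 => r _.
      case cr: (connect e p r); last by rewrite /x cr mulr0.
      have := none r; rewrite cr /= => /negbT; rewrite -ltNge; exact: ltW.
    by rewrite z ltxx.
  have cir : connect e i r by apply: connect_trans cr; rewrite csym.
  have [ds [sz dsum dsq]] := pathb _ _ cir.
  have cs := cs_seq ds.
  rewrite -dsum in cs.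
  have h1 : x i ^+ 2 <= (x i - x r) ^+ 2 by nra.
  apply: le_trans h1 _; apply: le_trans cs _.
  apply: ler_pM.
  - exact: ler0n.
  - by apply: sumr_ge0 => d _; exact: sqr_ge0.
  - have := natn _ sz; lra.
  - lra.
have T := Tsum ((n - 1) * (a * S)).
have : S <= \sum_(i < N) (n - 1) * (a * S) by apply: ler_sum => i _; exact: xi2.
rewrite T => h.
nra.
have Ka : 1 <= (n ^+ 2 - n + 1) * a.
  rewrite -(ler_pM2l Spos) mulr1.
  by apply: le_trans key _; rewrite mulrA [S * _]mulrC -mulrA.
rewrite /lambdaH ler_pdivrMr; last by apply: mulr_gt0; rewrite /n; nra.
rewrite -/n.
have h1 : 0 <= (n - 1) * (n - 2) ^+ 2 by apply: mulr_ge0; [lra | exact: sqr_ge0].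
nra.
Qed.
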